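(* Let $\delta_j,\delta_k$ be coprime integers with $1<\delta_j<\delta_k$, let $r=\delta_k \bmod \delta_j$, and let $f\colon \mathcal B(\delta_j,r)\to\mathcal B(\delta_k,\delta_j)$ be given by $f(x',y')=(y',\,x'-y'\lfloor \delta_k/\delta_j\rfloor)$. Then $f$ is well defined (maps into $\mathcal B(\delta_k,\delta_j)$), injective, and additive: whenever $\mathbf a,\mathbf b,\mathbf a+\mathbf b\in\mathcal B(\delta_j,r)$, one has $f(\mathbf a+\mathbf b)=f(\mathbf a)+f(\mathbf b)$.
   Context: For coprime positive integers $p,q$ and $i\in\{1,\ldots,\max\{p,q\}\}$, the $\lambda$-B\'ezout couple of $i$ for $(p,q)$ is the unique $(x,y)\in\mathbb Z^2$ with $xp+yq=i$ and $0<y\le p$, and the $\mu$-B\'ezout couple of $i$ for $(p,q)$ is the unique $(x,y)\in\mathbb Z^2$ with $xp+yq=i$ and $0<x\le q$. $\mathcal B(p,q)$ denotes the set of all $\lambda$- and $\mu$-B\'ezout couples for $(p,q)$ (for all such $i$); an element of $\mathcal B(p,q)$ is called a B\'ezout couple for $(p,q)$. Note that $1\le r<\delta_j$ since $\gcd(\delta_j,\delta_k)=1$ and $\delta_j>1$. *)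

(* Defs.v *)
From mathcomp Require Import all_boot all_order all_algebra.
Set Implicit Arguments. Unset Strict Implicit. Unset Printing Implicit Defensive.
Import Order.TTheory GRing.Theory Num.Theory.
Local Open Scope ring_scope.

Definition lambda_bezout (p q : nat) (c : int * int) : Prop :=
  exists i : nat, (1 <= i <= maxn p q)%N /\
    c.1 * p%:Z + c.2 * q%:Z = i%:Z /\ 0 < c.2 <= p%:Z.

Definition mu_bezout (p q : nat) (c : int * int) : Prop :=
  exists i : nat, (1 <= i <= maxn p q)%N /\
    c.1 * p%:Z + c.2 * q%:Z = i%:Z /\ 0 < c.1 <= q%:Z.

Definition bezout_couple (p q : nat) (c : int * int) : Prop :=
  lambda_bezout p q c \/ mu_bezout p q c.

Definition add_couple (a b : int * int) : int * int := (a.1 + b.1, a.2 + b.2).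

Definition bezout_f (dj dk : nat) (c : int * int) : int * int :=
  (c.2, c.1 - c.2 * (dk %/ dj)%N%:Z).

(* Main.v *)
Require Import Defs.
From mathcomp Require Import all_boot all_order all_algebra.
From mathcomp Require Import zify ring lra.
Import Order.TTheory GRing.Theory Num.Theory.

Section P1.
Local Open Scope ring_scope.
Lemma part1 (dj dk : nat)
  (Hcop : coprime dj dk) (H1 : (1 < dj)%N) (H2 : (dj < dk)%N) c :
  bezout_couple dj (dk %% dj) c -> bezout_couple dk dj (bezout_f dj dk c).
Proof.
have Hd := (divn_eq dk dj).
have Hr : (dk %% dj < dj)%N by rewrite ltn_mod; lia.
have Hr0 : (0 < dk %% dj)%N.
  rewrite lt0n; apply/negP => /eqP H0.
  have Hdv : (dj %| dk)%N by rewrite /dvdn H0.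
  move: Hcop; rewrite /coprime (gcdn_idPl Hdv). lia.
have Hmax : maxn dj (dk %% dj) = dj by apply/maxn_idPl; lia.
move: Hd Hr Hr0 Hmax.
set Q := (dk %/ dj)%N; set R := (dk %% dj)%N => Hd Hr Hr0 Hmax.
case: c => x y; rewrite /bezout_couple /lambda_bezout /mu_bezout /bezout_f /= Hmax.
have HdZ : dk%:Z = (Q%:Z * dj%:Z + R%:Z)%R by rewrite Hd; lia.
case=> [[i [Hi [He Hy]]]|[i [Hi [He Hx]]]].
- right; exists i; split; first lia.
  split; last exact: Hy.
  rewrite HdZ.
  have -> : ((y * (Q%:Z * dj%:Z + R%:Z) + (x - y * Q%:Z) * dj%:Z) =
     (x * dj%:Z + y * R%:Z))%R by ring.
  exact: He.
- left; exists i; split; first lia.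
  split.
    rewrite HdZ.
    have -> : ((y * (Q%:Z * dj%:Z + R%:Z) + (x - y * Q%:Z) * dj%:Z) =
       (x * dj%:Z + y * R%:Z))%R by ring.
    exact: He.
  have Hy0 : (y <= 0)%R by nia.
  have Hy1 : (0 < y + dj%:Z)%R by nia.
  have HQ : (0 <= - y * Q%:Z)%R by nia.
  have HQ2 : (- y * Q%:Z <= (dj%:Z - 1) * Q%:Z)%R by nia.
  rewrite HdZ. nia.
Qed.
End P1.

Theorem proposition3p5 (dj dk : nat)
  (Hcop : coprime dj dk) (H1 : (1 < dj)%N) (H2 : (dj < dk)%N) :
  (forall c, bezout_couple dj (dk %% dj) c ->
             bezout_couple dk dj (bezout_f dj dk c)) /\
  (forall a b, bezout_couple dj (dk %% dj) a -> bezout_couple dj (dk %% dj) b ->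
             bezout_f dj dk a = bezout_f dj dk b -> a = b) /\
  (forall a b, bezout_couple dj (dk %% dj) a -> bezout_couple dj (dk %% dj) b ->
             bezout_couple dj (dk %% dj) (add_couple a b) ->
             bezout_f dj dk (add_couple a b) =
             add_couple (bezout_f dj dk a) (bezout_f dj dk b)).
Proof.
split; first exact: part1.
split.
- move=> [x1 y1] [x2 y2] _ _; rewrite /bezout_f /= => [[E1 E2]].
  subst y2; congr pair; lia.
- move=> [x1 y1] [x2 y2] _ _ _; rewrite /bezout_f /add_couple /=.
  congr pair; ring.
Qed.
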